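(* Let functions $w_i,y_i$ ($i\in\mathcal{I}$), $z_j$ ($j\in\mathcal{J}$), $\psi_{ij}$ ($i\in\mathcal{I},j\in\mathcal{J}$, with $\psi_{ij}=0$ for $i\not\sim j$) be measurable and locally bounded on $[0,\infty)$ and satisfy $$\sum_{j\in\mathcal{J}}\mathfrak{T}_{\mu_{ij}}\psi_{ij}=w_i-\mathfrak{T}_{\theta_i}y_i,\quad i\in\mathcal{I},\qquad \sum_{i\in\mathcal{I}}\psi_{ij}=-z_j,\quad j\in\mathcal{J}.$$ (i) Then there are finite (possibly empty) sequences $A_i$ ($i\in\mathcal{I}$) and $B_j$ ($j\in\mathcal{J}$) with values in $\{\mu_{ij}:(i,j)\in\mathcal{E}\}$, such that, letting $A_i'$ denote the concatenation of $A_i$ with $\theta_i$, $$\sum_{i\in\mathcal{I}}\mathfrak{T}_{A_i}w_i-\sum_{i\in\mathcal{I}}\mathfrak{T}_{A_i'}y_i+\sum_{j\in\mathcal{J}}\mathfrak{T}_{B_j}z_j=0.$$ (ii) If $\mu_{ij}=\mu_j$ for $(i,j)\in\mathcal{E}$ and $\theta_i=0$ for $i\in\mathcal{I}$, then $\sum_{i\in\mathcal{I}}(w_i-y_i)+\sum_{j\in\mathcal{J}}\mathfrak{T}_{\mu_j}z_j=0$. (iii) If $\mu_{ij}=\mu_i$ for $(i,j)\in\mathcal{E}$ and $\theta_i=0$ for $i\in\mathcal{I}$, then $\sum_{i\in\mathcal{I}}\mathfrak{T}_{M_i}(w_i-y_i)+\mathfrak{T}_M(e\cdot z)=0$, where $M_i=(\mu_{i'})_{i'\in\mathcal{I},i'\ne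 i}$ and $M=(\mu_{i'})_{i'\in\mathcal{I}}$.
   Context: $\mathcal{I}=\{1,\dots,I\}$, $\mathcal{J}=\{I+1,\dots,I+J\}$, $\mathcal{E}\subset\mathcal{I}\times\mathcal{J}$, $i\sim j$ iff $(i,j)\in\mathcal{E}$; the bipartite graph $\mathcal{T}$ with vertices $\mathcal{I}\cup\mathcal{J}$ and edges $\mathcal{E}$ is a tree. Constants $\mu_{ij}>0$ for $(i,j)\in\mathcal{E}$, $\mu_{ij}=0$ otherwise, and $\theta_i\ge0$. For $f:[0,\infty)\to\mathbb{R}$ locally bounded measurable, $\mathfrak{J}f(t)=\int_0^tf(s)ds$ and, for $\alpha\in\mathbb{R}$, $\mathfrak{T}_\alpha f=f+\alpha\mathfrak{J}f$. For a finite real sequence $A=(\alpha_1,\dots,\alpha_k)$, $\mathfrak{T}_A=\mathfrak{T}_{\alpha_1}\circ\cdots\circ\mathfrak{T}_{\alpha_k}$ (identity if $A$ is empty). $e=(1,\dots,1)'$. *)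

(* Defs.v *)
From HB Require Import structures.
From mathcomp Require Import all_boot all_order all_algebra.
From mathcomp Require Import all_classical all_reals all_analysis.
Set Implicit Arguments. Unset Strict Implicit. Unset Printing Implicit Defensive.
Import Order.TTheory GRing.Theory Num.Theory.
Local Open Scope classical_set_scope.
Local Open Scope ring_scope.

Section Ops.
Variable R : realType.

Definition Jop (f : R -> R) : R -> R :=
  fun t => Rintegral lebesgue_measure `[0, t] f.

Definition Top (alpha : R) (f : R -> R) : R -> R :=
  fun t => f t + alpha * Jop f t.

Definition TopSeq (A : seq R) (f : R -> R) : R -> R :=
  foldr Top f A.

Definition meas_locbdd (f : R -> R) : Prop :=
  measurable_fun (`[(0:R), +oo[%classic : set R) f /\
  forall T : R, 0 <= T -> exists C : R, forall s : R, 0 <= s <= T -> `|f s| <= C.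
End Ops.

Definition bip_adj (I J : nat) (E : 'I_I -> 'I_J -> bool) : rel ('I_I + 'I_J) :=
  fun u v => match u, v with
             | inl i, inr j => E i j
             | inr j, inl i => E i j
             | _, _ => false
             end.

Definition is_tree (I J : nat) (E : 'I_I -> 'I_J -> bool) : Prop :=
  (forall u v, connect (bip_adj E) u v) /\
  (forall p : seq ('I_I + 'I_J), ucycle (bip_adj E) p -> (size p <= 2)%N).

(* Main.v *)
Require Import Defs.
From HB Require Import structures.
From mathcomp Require Import all_boot all_order all_algebra.
From mathcomp Require Import all_classical all_reals all_analysis.
From mathcomp Require Import ring lra.
Import Order.TTheory GRing.Theory Num.Theory.
Local Open Scope ring_scope.
Set Implicit Arguments. Unset Strict Implicit. Unset Printing Implicit Defensive.
Section Analysis.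
Variable R : realType.
Local Notation mu := (@lebesgue_measure R).

Definition locint (f : R -> R) :=
  forall t : R, 0 <= t -> mu.-integrable `[0, t]%classic (EFin \o f).
Definition eqp (f g : R -> R) := forall s : R, 0 <= s -> f s = g s.

Lemma locint_ext f g : locint f -> eqp f g -> locint g.
Proof.
move=> lf fg t t0; apply: eq_integrable (lf t t0) => // x.
by rewrite inE/= in_itv/= => /andP[x0 _]; rewrite /= fg.
Qed.

Lemma locintD f g : locint f -> locint g -> locint (fun s => f s + g s).
Proof.
move=> lf lg t t0; have := integrableD _ (lf t t0) (lg t t0).
move=> /(_ (measurable_itv _)) H; apply: eq_integrable H => // x _.
Qed.

Lemma locintZ c f : locint f -> locint (fun s => c * f s).
Proof.
move=> lf t t0; have := integrableZl _ c (lf t t0).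
move=> /(_ (measurable_itv _)) H; apply: eq_integrable H => // x _.
Qed.

Lemma locint0 : locint (fun _ => 0).
Proof. by move=> t t0; exact: integrable0. Qed.

Lemma locintN f : locint f -> locint (fun s => - f s).
Proof. by move=> lf; apply: (locint_ext (locintZ (-1) lf)) => s _; rewrite mulN1r. Qed.

Lemma locintB f g : locint f -> locint g -> locint (fun s => f s - g s).
Proof. by move=> lf lg; apply: locintD => //; exact: locintN. Qed.

Lemma locint_sum (I : Type) (r : seq I) (F : I -> R -> R) :
  (forall i, locint (F i)) -> locint (fun s => \sum_(i <- r) F i s).
Proof.
move=> lF; elim: r => [|i r IH].
  by apply: (locint_ext locint0) => s _; rewrite big_nil.
by apply: (locint_ext (locintD (lF i) IH)) => s _; rewrite big_cons.
Qed.

Lemma locintJ f : locint f -> locint (Jop f).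
Proof.
move=> lf t t0; apply: continuous_compact_integrable; first exact: segment_compact.
have := @parameterized_integral_continuous R 0 t f t0 (lf t t0).
move=> H1; exact: H1.
Qed.

Lemma locint_meas f : meas_locbdd f -> locint f.
Proof.
case=> mf bd t t0; apply: measurable_bounded_integrable => //.
- have := @lebesgue_measure_itv R `[0, t]; move=> /= ->.
  by case: ifP => // _; rewrite -EFinD ltry.
- apply: measurable_funS mf => //; by move=> x; rewrite /= !in_itv /= => /andP[-> _].
- have [C HC] := bd t t0; exists C; split; first exact: num_real.
  move=> M CM x; rewrite /= in_itv/= => xt.
  by apply: le_trans (HC x xt) (ltW CM).
Qed.

Lemma J_ext f g t : eqp f g -> Jop f t = Jop g t.
Proof.
move=> fg; apply: eq_Rintegral => x.
by rewrite inE/= in_itv/= => /andP[x0 _]; exact: fg.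
Qed.

Lemma JD f g t : locint f -> locint g -> 0 <= t ->
  Jop (fun s => f s + g s) t = Jop f t + Jop g t.
Proof. by move=> lf lg t0; rewrite /Jop RintegralD //; [exact: lf|exact: lg]. Qed.

Lemma JZ c f t : locint f -> 0 <= t -> Jop (fun s => c * f s) t = c * Jop f t.
Proof. by move=> lf t0; rewrite /Jop RintegralZl //; exact: lf. Qed.

Lemma J0 (t : R) : Jop (fun _ => 0) t = 0.
Proof. by rewrite /Jop Rintegral_cst // mul0r. Qed.

End Analysis.
Section TS.
Variable R : realType.
Implicit Types (f g : R -> R) (s : seq R) (a b : R).

Lemma TS_cons a s f : TopSeq (a :: s) f = Top a (TopSeq s f).
Proof. by []. Qed.

Lemma TS_rcons s a f : TopSeq (rcons s a) f = TopSeq s (Top a f).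
Proof. by rewrite /TopSeq foldr_rcons. Qed.

Lemma locintT a f : locint f -> locint (Top a f).
Proof. by move=> lf; apply: locintD => //; apply: locintZ; exact: locintJ. Qed.

Lemma locintTS s f : locint f -> locint (TopSeq s f).
Proof. by elim: s => [|a s IH] //= lf; apply: locintT; exact: IH. Qed.

Lemma T_ext a f g : eqp f g -> eqp (Top a f) (Top a g).
Proof. by move=> fg x x0; rewrite /Top fg // (J_ext _ fg). Qed.

Lemma TS_ext s f g : eqp f g -> eqp (TopSeq s f) (TopSeq s g).
Proof. by elim: s => [|a s IH] // fg; rewrite !TS_cons; apply: T_ext; exact: IH. Qed.

Lemma TS_ext' s f g x : eqp f g -> 0 <= x -> TopSeq s f x = TopSeq s g x.
Proof. by move=> fg x0; exact: TS_ext. Qed.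

Lemma TD a f g : locint f -> locint g ->
  eqp (Top a (fun x => f x + g x)) (fun x => Top a f x + Top a g x).
Proof.
move=> lf lg x x0; rewrite /Top JD // mulrDr.
by rewrite -!addrA; congr (_ + _); rewrite addrCA.
Qed.

Lemma TSD s f g : locint f -> locint g ->
  eqp (TopSeq s (fun x => f x + g x)) (fun x => TopSeq s f x + TopSeq s g x).
Proof.
elim: s => [|a s IH] lf lg x x0 //; rewrite !TS_cons.
rewrite (T_ext _ (IH lf lg)) //; apply: TD => //; exact: locintTS.
Qed.

Lemma TZ a c f : locint f ->
  eqp (Top a (fun x => c * f x)) (fun x => c * Top a f x).
Proof.
by move=> lf x x0; rewrite /Top JZ // mulrDr mulrCA.
Qed.

Lemma TSZ s c f : locint f ->
  eqp (TopSeq s (fun x => c * f x)) (fun x => c * TopSeq s f x).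
Proof.
elim: s => [|a s IH] lf x x0 //; rewrite !TS_cons.
rewrite (T_ext _ (IH lf)) //; apply: TZ => //; exact: locintTS.
Qed.

Lemma TS0 s : eqp (TopSeq s (fun _ => 0)) (fun _ => 0).
Proof.
move=> x x0; have H := TSZ s 0 (@locint0 R) x0.
rewrite [RHS]mul0r in H; rewrite -[RHS]H; apply: TS_ext' => // y _ /=; by rewrite mul0r.
Qed.

Lemma TSN s f : locint f -> eqp (TopSeq s (fun x => - f x)) (fun x => - TopSeq s f x).
Proof.
move=> lf x x0; rewrite -mulN1r -(TSZ s (-1) lf x0).
by apply: TS_ext' => // y _ /=; rewrite mulN1r.
Qed.

Lemma TSB s f g : locint f -> locint g ->
  eqp (TopSeq s (fun x => f x - g x)) (fun x => TopSeq s f x - TopSeq s g x).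
Proof.
move=> lf lg x x0; rewrite (TSD s lf (locintN lg) x0) TSN //.
Qed.

Lemma TSsum s (I : Type) (r : seq I) (F : I -> R -> R) :
  (forall i, locint (F i)) ->
  eqp (TopSeq s (fun x => \sum_(i <- r) F i x))
      (fun x => \sum_(i <- r) TopSeq s (F i) x).
Proof.
move=> lF; elim: r => [|i r IH] x x0.
  rewrite big_nil -[RHS](TS0 s x0); apply: TS_ext' => // y _ /=; by rewrite big_nil.
rewrite big_cons -IH //.
rewrite -(TSD s (lF i) (locint_sum r lF) x0).
by apply: TS_ext' => // y _ /=; rewrite big_cons.
Qed.

Lemma T_comm a b f : locint f -> eqp (Top a (Top b f)) (Top b (Top a f)).
Proof.
move=> lf x x0; rewrite /Top.
rewrite (JD (g := fun u => b * Jop f u)) //; last by apply: locintZ; exact: locintJ.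
rewrite (JD (g := fun u => a * Jop f u)) //; last by apply: locintZ; exact: locintJ.
rewrite !JZ //; try exact: locintJ.
rewrite !mulrDr !mulrA (mulrC a b); lra.
Qed.

Lemma TS_comm a s f : locint f -> eqp (Top a (TopSeq s f)) (TopSeq s (Top a f)).
Proof.
elim: s => [|b s IH] lf x x0 //; rewrite !TS_cons.
rewrite (T_comm _ _ (locintTS s lf) x0).
exact: (T_ext _ (IH lf)).
Qed.

Lemma TS_move s1 s2 a f : locint f ->
  eqp (TopSeq (s1 ++ a :: s2) f) (TopSeq (rcons (s1 ++ s2) a) f).
Proof.
move=> lf; rewrite -cats1 -catA /TopSeq !foldr_cat /=.
apply: TS_ext; exact: TS_comm.
Qed.

End TS.
Lemma split_filter (T : eqType) (U : Type) (f : T -> U) (p q : pred T)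
  (l : seq T) x : uniq l -> x \in l -> p x -> ~~ q x ->
  (forall y, y != x -> p y = q y) ->
  exists s1 s2, map f (seq.filter p l) = s1 ++ f x :: s2 /\
                map f (seq.filter q l) = s1 ++ s2.
Proof.
move=> ul xl px qx pq; case/splitPr: xl ul => l1 l2.
rewrite cat_uniq /= => /and3P[_ /norP[h1 _] /andP[h2 _]].
exists (map f (seq.filter q l1)), (map f (seq.filter q l2)).
rewrite !filter_cat /= px (negbTE qx) !map_cat /=.
have e1 : seq.filter p l1 = seq.filter q l1.
  by apply: eq_in_filter => y yl; apply: pq; apply: contraNneq h1 => <-.
have e2 : seq.filter p l2 = seq.filter q l2.
  by apply: eq_in_filter => y yl; apply: pq; apply: contraNneq h2 => <-.
by rewrite e1 e2.
Qed.

Section Graph.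
Variables (I J : nat) (E : 'I_I -> 'I_J -> bool).

Definition adjm (e : 'I_I * 'I_J) : rel ('I_I + 'I_J) :=
  fun u v => bip_adj E u v &&
    ~~ (((u == inl e.1) && (v == inr e.2)) || ((u == inr e.2) && (v == inl e.1))).

Definition side (e : 'I_I * 'I_J) (v : 'I_I + 'I_J) := connect (adjm e) v (inr e.2).

Lemma side_edge e i j : E i j -> e != (i, j) -> side e (inl i) = side e (inr j).
Proof.
case: e => a b Eij ne.
have a1 : adjm (a, b) (inl i) (inr j).
  rewrite /adjm /= Eij /= orbF; apply: contra ne => /andP[/eqP[e1] /eqP[e2]].
  by rewrite e1 e2 eqxx.
have a2 : adjm (a, b) (inr j) (inl i).
  rewrite /adjm /= Eij /=; apply: contra ne => /andP[/eqP[e1] /eqP[e2]].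
  by rewrite e1 e2 eqxx.
by apply/idP/idP => H; [apply: connect_trans (connect1 a2) H |
                        apply: connect_trans (connect1 a1) H].
Qed.

Lemma side_self e : side e (inr e.2).
Proof. exact: connect0. Qed.

Lemma side_false i j :
  (forall p : seq ('I_I + 'I_J), ucycle (bip_adj E) p -> (size p <= 2)%N) ->
  E i j -> side (i, j) (inl i) = false.
Proof.
move=> acyc Eij; apply/negP => /connectP [p pth lst].
case/shortenP: pth lst => p' pth' uq _ lst'.
have uc : ucycle (bip_adj E) (inl i :: p').
  rewrite /ucycle uq andbT /cycle rcons_path -lst' /= Eij andbT.
  by apply: sub_path pth' => u v /andP[].
have := acyc _ uc; case: p' pth' uq lst' {uc} => [|v [|v' p']] //=.
move=> pth' _ lst'; move: pth'; rewrite -lst' /adjm /= !eqxx /=.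
by rewrite andbF.
Qed.

End Graph.
Theorem theorem2 (R : realType) (I J : nat) (E : 'I_I -> 'I_J -> bool)
  (mu : 'I_I -> 'I_J -> R) (theta : 'I_I -> R)
  (w y : 'I_I -> R -> R) (z : 'I_J -> R -> R) (psi : 'I_I -> 'I_J -> R -> R) :
  is_tree E ->
  (forall i j, E i j -> 0 < mu i j) ->
  (forall i j, ~~ E i j -> mu i j = 0) ->
  (forall i, 0 <= theta i) ->
  (forall i, meas_locbdd (w i)) -> (forall i, meas_locbdd (y i)) ->
  (forall j, meas_locbdd (z j)) -> (forall i j, meas_locbdd (psi i j)) ->
  (forall i j t, ~~ E i j -> 0 <= t -> psi i j t = 0) ->
  (forall i t, 0 <= t ->
     \sum_(j < J) Top (mu i j) (psi i j) t = w i t - Top (theta i) (y i) t) ->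
  (forall j t, 0 <= t -> \sum_(i < I) psi i j t = - z j t) ->
  (* (i) *)
  (exists (A : 'I_I -> seq R) (B : 'I_J -> seq R),
     (forall i a, a \in A i -> exists i' j', E i' j' /\ mu i' j' = a) /\
     (forall j b, b \in B j -> exists i' j', E i' j' /\ mu i' j' = b) /\
     (forall t, 0 <= t ->
        \sum_(i < I) TopSeq (A i) (w i) t
        - \sum_(i < I) TopSeq (rcons (A i) (theta i)) (y i) t
        + \sum_(j < J) TopSeq (B j) (z j) t = 0))
  /\
  (* (ii) *)
  (forall muJ : 'I_J -> R,
     (forall i j, E i j -> mu i j = muJ j) -> (forall i, theta i = 0) ->
     forall t, 0 <= t ->
       \sum_(i < I) (w i t - y i t) + \sum_(j < J) Top (muJ j) (z j) t = 0)
  /\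
  (* (iii) *)
  (forall muI : 'I_I -> R,
     (forall i j, E i j -> mu i j = muI i) -> (forall i, theta i = 0) ->
     forall t, 0 <= t ->
       \sum_(i < I) TopSeq [seq muI i' | i' <- enum 'I_I & i' != i]
                           (fun s => w i s - y i s) t
       + TopSeq [seq muI i' | i' <- enum 'I_I] (fun s => \sum_(j < J) z j s) t
       = 0).
Proof.
move=> [_ acyc] Epos Enz th0 mw my mz mpsi psi0 eqI eqJ.
have lw : forall i, locint (w i) by move=> i; exact: locint_meas.
have ly : forall i, locint (y i) by move=> i; exact: locint_meas.
have lz : forall j, locint (z j) by move=> j; exact: locint_meas.
have lpsi : forall i j, locint (psi i j) by move=> i j; exact: locint_meas.
have psiz : forall i j, ~~ E i j -> eqp (psi i j) (fun _ => 0).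
  by move=> i j nE s s0; exact: psi0.
have sumpsi : forall j, eqp (fun x => \sum_(i < I) psi i j x) (fun x => - z j x).
  by move=> j s s0; exact: eqJ.
have Tz : forall i j a b t, ~~ E i j -> 0 <= t -> Top a (psi i j) t = Top b (psi i j) t.
  move=> i j a b t nE t0.
  by rewrite /Top psi0 // !(J_ext t (psiz i j nE)) J0 !mulr0.
split.
  pose es := enum {: 'I_I * 'I_J}.
  pose pr v (e : 'I_I * 'I_J) := E e.1 e.2 && side E e v.
  pose A i := [seq mu e.1 e.2 | e <- es & pr (inl i) e].
  pose B j := [seq mu e.1 e.2 | e <- es & pr (inr j) e].
  exists A, B.
  split.
    move=> i a /mapP[e]; rewrite mem_filter => /andP[/andP[Ee _] _] ->.
    by exists e.1, e.2.
  split.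
    move=> j a /mapP[e]; rewrite mem_filter => /andP[/andP[Ee _] _] ->.
    by exists e.1, e.2.
  move=> t t0.
  have key : forall i j, TopSeq (rcons (A i) (mu i j)) (psi i j) t = TopSeq (B j) (psi i j) t.
    move=> i j; case Eij: (E i j); last first.
      have nE : ~~ E i j by rewrite Eij.
      rewrite (TS_ext' _ (psiz i j nE) t0) (TS_ext' (B j) (psiz i j nE) t0).
      by rewrite !(TS0 _ t0).
    have hp : pr (inr j) (i, j) by rewrite /pr /= Eij; exact: (side_self E (i, j)).
    have hq : ~~ pr (inl i) (i, j) by rewrite /pr /= Eij (side_false acyc Eij).
    have hpq : forall e, e != (i, j) -> pr (inr j) e = pr (inl i) e.
      move=> e ne; rewrite /pr; case Ee: (E e.1 e.2) => //=.
      by rewrite (side_edge Eij ne).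
    have [s1 [s2 [hB hA]]] := split_filter (fun e : 'I_I * 'I_J => mu e.1 e.2)
       (l := es) (enum_uniq _) (mem_enum _ (i, j)) hp hq hpq.
    rewrite /A /B hA hB; symmetry; exact: (TS_move s1 s2 _ (lpsi i j) t0).
  have step : forall i, TopSeq (A i) (w i) t - TopSeq (rcons (A i) (theta i)) (y i) t
                        = \sum_(j < J) TopSeq (B j) (psi i j) t.
    move=> i; rewrite TS_rcons -(TSB (A i) (lw i) (locintT (theta i) (ly i)) t0).
    rewrite (TS_ext' (g := fun x => \sum_(j < J) Top (mu i j) (psi i j) x) _ _ t0); last first.
      by move=> x x0 /=; rewrite eqI.
    rewrite (TSsum (A i) (index_enum 'I_J) (F := fun j => Top (mu i j) (psi i j))
               (fun j => locintT _ (lpsi i j)) t0).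
    by apply: eq_bigr => j _; rewrite -key TS_rcons.
  rewrite -sumrB (eq_bigr _ (fun i _ => step i)) exchange_big /= -big_split /= big1 // => j _.
  rewrite -(TSsum (B j) (index_enum 'I_I) (F := fun i => psi i j) (fun i => lpsi i j) t0).
  by rewrite (TS_ext' _ (sumpsi j) t0) (TSN (B j) (lz j) t0) addNr.
split.
  move=> muJ hmu th t t0.
  have e1 : forall i, w i t - y i t = \sum_(j < J) Top (muJ j) (psi i j) t.
    move=> i; transitivity (\sum_(j < J) Top (mu i j) (psi i j) t).
      by rewrite eqI // /Top th mul0r addr0.
    apply: eq_bigr => j _; case Eij: (E i j); first by rewrite hmu.
    by apply: Tz => //; rewrite Eij.
  rewrite (eq_bigr _ (fun i _ => e1 i)) exchange_big /= -big_split /= big1 // => j _.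
  have := TSsum [:: muJ j] (index_enum 'I_I) (F := fun i => psi i j) (fun i => lpsi i j) t0.
  move=> /= <-.
  rewrite (T_ext (muJ j) (sumpsi j) t0).
  have := TSN [:: muJ j] (lz j) t0; move=> /= ->.
  by rewrite addNr.
move=> muI hmu th t t0.
pose P i := fun x => \sum_(j < J) psi i j x.
have lP : forall i, locint (P i) by move=> i; exact: (locint_sum _ (fun j => lpsi i j)).
have e1 : forall i, TopSeq [seq muI i' | i' <- enum 'I_I & i' != i] (fun s => w i s - y i s) t
                    = TopSeq [seq muI i' | i' <- enum 'I_I] (P i) t.
  move=> i.
  have hq : ~~ (i != i) by rewrite eqxx.
  have hpq : forall k, k != i -> predT k = (k != i) by move=> k ki; rewrite /= ki.
  have [s1 [s2 [hM hMi]]] := split_filter muI (p := predT) (q := fun i' => i' != i)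
     (l := enum 'I_I) (x := i) (enum_uniq _) (mem_enum _ i) erefl hq hpq.
  rewrite filter_predT in hM.
  rewrite hMi hM (TS_move s1 s2 (muI i) (lP i) t0) TS_rcons.
  apply: TS_ext' => // x x0.
  transitivity (w i x - Top (theta i) (y i) x); first by rewrite /Top th mul0r addr0.
  rewrite -eqI // /P.
  have := TSsum [:: muI i] (index_enum 'I_J) (F := psi i) (fun j => lpsi i j) x0.
  move=> /= ->.
  apply: eq_bigr => j _; case Eij: (E i j); first by rewrite hmu.
  by apply: Tz => //; rewrite Eij.
rewrite (eq_bigr _ (fun i _ => e1 i)).
have := TSsum [seq muI i' | i' <- enum 'I_I] (index_enum 'I_I) (F := P) lP t0.
move=> <-.
rewrite (TS_ext' (g := fun x => - \sum_(j < J) z j x) _ _ t0); last first.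
  move=> x x0; rewrite /P exchange_big /= -sumrN; apply: eq_bigr => j _; exact: eqJ.
have := TSN [seq muI i' | i' <- enum 'I_I] (f := fun x => \sum_(j < J) z j x) (locint_sum _ lz) t0.
move=> ->; by rewrite addNr.
Qed.
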